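(* Let $\tau:\mathbb N\to\mathbb N$ be defined by $\tau(n)=\lfloor\varphi n+1\rfloor$ if $n\in R_{2,0}$, $\tau(n)=\lfloor\varphi n-1\rfloor$ if $n\in R_{1,0}$, and $\tau(n)=\lfloor(\varphi-1)n+1\rfloor$ if $n\in R_{1,1}$. If $n\in R_{1,0}$, then $\tau(n)\in R_{1,0}$ and $\tau^3(n)=\tau^2(n)+\tau(n)-2$.
   Context: $\mathbb N=\{1,2,\dots\}$, $\varphi=\frac{1+\sqrt5}{2}$, $F$ the Fibonacci numbers ($F(0)=0,F(1)=F(2)=1$). For $i\in\mathbb Z^{\ge0},j\in\mathbb Z$, $R_{i,j}$ is the range of $n\mapsto F(i+1)\lfloor n\varphi\rfloor+F(i)n-j$, $n\in\mathbb N$; the sets $R_{2,0},R_{1,0},R_{1,1}$ partition $\mathbb N$. $\tau^k$ denotes the $k$-fold composition. *)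

(* Defs.v *)
From Stdlib Require Import Reals ZArith Lia Lra.
Open Scope R_scope.

Fixpoint fib (n : nat) : nat :=
  match n with
  | O => O
  | S m => match m with
           | O => 1%nat
           | S k => (fib m + fib k)%nat
           end
  end.

Definition phi : R := (1 + sqrt 5) / 2.

Definition floorR (r : R) : Z := Int_part r.

Definition Rij (i : nat) (j : Z) (m : Z) : Prop :=
  exists n : nat, (1 <= n)%nat /\
    m = (Z.of_nat (fib (i + 1)) * floorR (INR n * phi)
         + Z.of_nat (fib i) * Z.of_nat n - j)%Z.

(* Main.v *)
Require Import Defs.
From Stdlib Require Import Reals ZArith Lia Lra Psatz.
Open Scope R_scope.

Lemma sq5_div (x y : Z) : (x*x = 5*(y*y))%Z -> exists q, x = (5*q)%Z.
Proof.
  intros H.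
  pose proof (Z.div_mod x 5 ltac:(lia)) as Hd.
  pose proof (Z.mod_pos_bound x 5 ltac:(lia)) as Hb.
  set (q := (x / 5)%Z) in *. set (r := (x mod 5)%Z) in *.
  exists q.
  assert (r = 0 \/ r = 1 \/ r = 2 \/ r = 3 \/ r = 4)%Z as Hr by lia.
  rewrite Hd in H.
  destruct Hr as [->|[->|[->|[->| ->]]]]; try lia; exfalso;
  assert (Hx: ((5*q+_)*(5*q+_) = 5*(5*q*q+2*q*_) + _)%Z) by ring; nia.
Qed.

Lemma no_sq5_aux (N : nat) : forall x y : Z, (Z.abs_nat y <= N)%nat -> y <> 0%Z -> (x*x <> 5*(y*y))%Z.
Proof.
  induction N as [|N IH]; intros x y Hy Hy0 H.
  - lia.
  - destruct (sq5_div x y H) as [q Hq]. subst x.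
    assert (H2 : (y*y = 5*(q*q))%Z) by lia.
    destruct (sq5_div y q H2) as [p Hp]. subst y.
    assert (H3 : (q*q = 5*(p*p))%Z) by lia.
    apply (IH q p); lia.
Qed.

Lemma phi_sq : phi * phi = phi + 1.
Proof. unfold phi. pose proof (sqrt_sqrt 5 ltac:(lra)). nra. Qed.

Lemma phi_bounds : 1.6 < phi < 1.7.
Proof. unfold phi. pose proof (sqrt_sqrt 5 ltac:(lra)). pose proof (sqrt_pos 5). split; nra. Qed.

Lemma phi_irr (k : nat) (z : Z) : (1 <= k)%nat -> INR k * phi <> IZR z.
Proof.
  intros Hk H.
  assert (Hs : INR k * sqrt 5 = 2 * IZR z - INR k).
  { unfold phi in H. lra. }
  pose proof (sqrt_sqrt 5 ltac:(lra)) as H5.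
  assert (E : (2 * IZR z - INR k) * (2 * IZR z - INR k) = 5 * (INR k * INR k)).
  { rewrite <- Hs. replace (INR k * sqrt 5 * (INR k * sqrt 5)) with (INR k * INR k * (sqrt 5 * sqrt 5)) by ring. rewrite H5. ring. }
  rewrite INR_IZR_INZ in E.
  assert (E' : ((2*z - Z.of_nat k)*(2*z - Z.of_nat k) = 5*(Z.of_nat k * Z.of_nat k))%Z).
  { apply eq_IZR. rewrite !mult_IZR, !minus_IZR, !mult_IZR. exact E. }
  apply (no_sq5_aux (Z.abs_nat (Z.of_nat k)) _ _ (le_n _) ltac:(lia) E').
Qed.

Lemma floor_unique (z : Z) (r : R) : IZR z <= r < IZR z + 1 -> floorR r = z.
Proof.
  intros [H1 H2]. unfold floorR. destruct (base_Int_part r) as [A B].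
  assert (Int_part r < z + 1)%Z by (apply lt_IZR; rewrite plus_IZR; simpl; lra).
  assert (z < Int_part r + 1)%Z by (apply lt_IZR; rewrite plus_IZR; simpl; lra).
  lia.
Qed.

Lemma frac (k : nat) : (1 <= k)%nat ->
  0 < INR k * phi - IZR (floorR (INR k * phi)) < 1.
Proof.
  intros Hk. unfold floorR. destruct (base_Int_part (INR k * phi)) as [A B].
  pose proof (phi_irr k (Int_part (INR k * phi)) Hk). split; [|lra].
  destruct A; [lra|]. exfalso; auto.
Qed.

Definition A (k : nat) : Z := floorR (INR k * phi).

Lemma A_pos (k : nat) : (1 <= k)%nat -> (1 <= A k)%Z.
Proof.
  intros Hk. unfold A. pose proof (frac k Hk). pose proof phi_bounds.
  assert (1 <= INR k) by (apply (le_INR 1); lia).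
  assert (Hp : 0 < IZR (floorR (INR k * phi))) by nra.
  apply lt_IZR in Hp. lia.
Qed.

Lemma F1 (k : nat) : (1 <= k)%nat -> floorR (IZR (A k) * phi) = (A k + Z.of_nat k - 1)%Z.
Proof.
  intros Hk. pose proof (frac k Hk) as Hf. pose proof phi_bounds. pose proof phi_sq.
  unfold A in *. set (a := floorR (INR k * phi)) in *.
  set (e := INR k * phi - IZR a) in *.
  assert (Ha : IZR a = INR k * phi - e) by (unfold e; ring).
  assert (Hq : IZR a * phi = IZR a + INR k - (phi - 1) * e).
  { rewrite Ha. replace ((INR k * phi - e) * phi) with (INR k * (phi*phi) - e * phi) by ring.
    rewrite H0. ring. }
  apply floor_unique. rewrite Hq, !minus_IZR, plus_IZR, <- INR_IZR_INZ. nra.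
Qed.

Lemma F2 (k : nat) : (1 <= k)%nat ->
  floorR (phi * IZR (A k + Z.of_nat k) - 1) = (2 * A k + Z.of_nat k - 1)%Z.
Proof.
  intros Hk. pose proof (frac k Hk) as Hf. pose proof phi_bounds. pose proof phi_sq.
  unfold A in *. set (a := floorR (INR k * phi)) in *.
  set (e := INR k * phi - IZR a) in *.
  assert (Ha : IZR a = INR k * phi - e) by (unfold e; ring).
  assert (Hq : phi * IZR (a + Z.of_nat k) - 1 = IZR a + IZR a + INR k - 1 + (2 - phi) * e).
  { rewrite plus_IZR, <- INR_IZR_INZ, Ha.
    replace (phi * (INR k * phi - e + INR k) - 1) with (INR k * (phi*phi) - e * phi + phi * INR k - 1) by ring.
    rewrite H0. ring. }
  apply floor_unique. rewrite Hq, !minus_IZR, plus_IZR, mult_IZR, <- INR_IZR_INZ. simpl. nra.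
Qed.

Lemma step (tau : nat -> nat)
  (H10 : forall n : nat, (1 <= n)%nat -> Rij 1 0%Z (Z.of_nat n) ->
           Z.of_nat (tau n) = floorR (phi * INR n - 1))
  (k m : nat) : (1 <= k)%nat -> Z.of_nat m = (A k + Z.of_nat k)%Z ->
  Rij 1 0 (Z.of_nat m) /\ exists k', (1 <= k')%nat /\ Z.of_nat k' = A k /\
     A k' = (A k + Z.of_nat k - 1)%Z /\ Z.of_nat (tau m) = (A k' + Z.of_nat k')%Z.
Proof.
  intros Hk Hm. pose proof (A_pos k Hk).
  assert (HR : Rij 1 0 (Z.of_nat m)).
  { exists k. split; [exact Hk|]. rewrite Hm. change (fib (1+1)) with 1%nat. change (fib 1) with 1%nat. unfold A. lia. }
  split; [exact HR|].
  exists (Z.to_nat (A k)). split; [lia|]. rewrite Z2Nat.id by lia. split; [reflexivity|].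
  assert (HA : A (Z.to_nat (A k)) = (A k + Z.of_nat k - 1)%Z).
  { unfold A at 1. rewrite INR_IZR_INZ, Z2Nat.id by lia. apply F1; exact Hk. }
  split; [exact HA|].
  rewrite (H10 m ltac:(lia) HR), INR_IZR_INZ, Hm, F2 by exact Hk. lia.
Qed.

Theorem lemma4p6 (tau : nat -> nat)
  (H20 : forall n : nat, (1 <= n)%nat -> Rij 2 0%Z (Z.of_nat n) ->
           Z.of_nat (tau n) = floorR (phi * INR n + 1))
  (H10 : forall n : nat, (1 <= n)%nat -> Rij 1 0%Z (Z.of_nat n) ->
           Z.of_nat (tau n) = floorR (phi * INR n - 1))
  (H11 : forall n : nat, (1 <= n)%nat -> Rij 1 1%Z (Z.of_nat n) ->
           Z.of_nat (tau n) = floorR ((phi - 1) * INR n + 1))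
  (n : nat) (hn : (1 <= n)%nat) (hR : Rij 1 0%Z (Z.of_nat n)) :
  Rij 1 0%Z (Z.of_nat (tau n)) /\
  Z.of_nat (tau (tau (tau n))) =
    (Z.of_nat (tau (tau n)) + Z.of_nat (tau n) - 2)%Z.
Proof.
  destruct hR as [k0 [Hk0 E0]]. change (fib (1+1)) with 1%nat in E0. change (fib 1) with 1%nat in E0.
  assert (Hn0 : Z.of_nat n = (A k0 + Z.of_nat k0)%Z) by (unfold A; lia).
  destruct (step tau H10 k0 n Hk0 Hn0) as [_ [k1 [Hk1 [E1 [A1 T1]]]]].
  destruct (step tau H10 k1 (tau n) Hk1 T1) as [R1 [k2 [Hk2 [E2 [A2 T2]]]]].
  destruct (step tau H10 k2 (tau (tau n)) Hk2 T2) as [_ [k3 [Hk3 [E3 [A3 T3]]]]].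
  split; [exact R1|]. lia.
Qed.
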